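(* Let $G$ and $H$ be finite simple graphs and $m,n$ positive integers. The direct product ${\sf M}_m(G)\times{\sf M}_n(H)$ is a cover graph if and only if $G$ or $H$ is bipartite.
   Context: A graph is a cover graph if it is the underlying (undirected) graph of the Hasse diagram of some finite partially ordered set. The direct product $G \times H$ has vertex set $V(G)\times V(H)$, with $(g_i,h_s)$ adjacent to $(g_j,h_t)$ if and only if $g_ig_j \in E(G)$ and $h_sh_t \in E(H)$. For a graph $G$ with vertex set $V_0=\{\langle 0,j\rangle : 0\le j\le N-1\}$ and edge set $E_0$, and $m>0$, the generalized Mycielskian ${\sf M}_m(G)$ has vertex set $V_0\cup V_1\cup\cdots\cup V_m\cup\{u\}$ where $V_i=\{\langle i,j\rangle: 0\le j\le N-1\}$, and edge set $E_0\cup E_1\cup\cdots\cup E_m\cup\{\langle m,j\rangle u: 0\le j\le N-1\}$, where $E_i=\{\langle i-1,j\rangle\langle i,k\rangle : \langle 0,j\rangle\langle 0,k\rangle\in E_0\}$ for $1\le i\le m$. *)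

(* Defs.v *)
From mathcomp Require Import all_boot.
Set Implicit Arguments. Unset Strict Implicit. Unset Printing Implicit Defensive.

(* A finite simple graph is a symmetric irreflexive relation [e : rel T] on a finType T. *)

Definition bipartite (T : finType) (e : rel T) : Prop :=
  exists c : T -> bool, forall x y, e x y -> c x != c y.

Definition covers (V : finType) (lt : rel V) (x y : V) : bool :=
  lt x y && [forall z, ~~ (lt x z && lt z y)].

Definition is_cover_graph (V : finType) (adj : rel V) : Prop :=
  exists lt : rel V,
    irreflexive lt /\ transitive lt /\
    forall x y, adj x y = covers lt x y || covers lt y x.

Definition direct_prod (V W : finType) (a : rel V) (b : rel W) : rel (V * W) :=
  fun p q => a p.1 q.1 && b p.2 q.2.

(* Generalized Mycielskian M_m(G): vertex <i,j> is [Some (i, j)] with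
   i : 'I_(m.+1) (levels 0..m), j : T; the apex u is [None]. *)
Definition mycielskian (T : finType) (e : rel T) (m : nat)
  : rel (option ('I_m.+1 * T)) :=
  fun x y =>
    match x, y with
    | Some (i, j), Some (i', k) =>
        e j k && [|| ((i == 0 :> nat) && (i' == 0 :> nat)),
                     (i.+1 == i' :> nat) | (i'.+1 == i :> nat)]
    | Some (i, _), None => i == m :> nat
    | None, Some (i, _) => i == m :> nat
    | None, None => false
    end.
Arguments mycielskian {T} e m.

(* Main.v *)
Require Import Defs.
From mathcomp Require Import all_boot.
From mathcomp Require Import zify.
From Stdlib Require Import Classical.
Set Implicit Arguments. Unset Strict Implicit. Unset Printing Implicit Defensive.
Lemma cover_of_col (V : finType) (adj : rel V) (col : V -> nat) :
  symmetric adj -> (forall p q, adj p q -> col p != col q) -> (forall p, col p <= 2) ->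
  (forall p q r, adj p q -> adj q r -> adj p r -> False) -> is_cover_graph adj.
Proof.
move=> sym Hc H2 Htri.
pose lt := fun p q => (adj p q && (col p < col q)) ||
   [&& col p == 0, col q == 2 & [exists r, adj p r && adj r q]].
have ltc : forall p q, lt p q -> col p < col q.
  move=> p q /orP[/andP[_ ->]//|/and3P[/eqP-> /eqP-> _]] //.
exists lt; split; last split.
- by move=> p; apply/negbTE; apply/negP=> /ltc; rewrite ltnn.
- move=> q p r Hpq Hqr.
  have h1 := ltc _ _ Hpq; have h2 := ltc _ _ Hqr.
  have hp := H2 p; have hq := H2 q; have hr := H2 r.
  apply/orP; right; apply/and3P; split; [apply/eqP; lia|apply/eqP; lia|].
  apply/existsP; exists q.
  move: Hpq Hqr; rewrite /lt.
  have -> : (col q == 0) = false by apply/negbTE/eqP; lia.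
  have -> : (col q == 2) = false by apply/negbTE/eqP; lia.
  by rewrite !andbF !orbF => /andP[-> _] /andP[-> _].
- have key : forall p q, adj p q -> col p < col q -> covers lt p q.
    move=> p q Hpq Hlt; apply/andP; split; first by rewrite /lt Hpq Hlt.
    apply/forallP=> z; apply/negP=> /andP[Hpz Hzq].
    have h1 := ltc _ _ Hpz; have h2 := ltc _ _ Hzq.
    have hp := H2 p; have hq := H2 q; have hz := H2 z.
    move: Hpz Hzq; rewrite /lt.
    have -> : (col z == 0) = false by apply/negbTE/eqP; lia.
    have -> : (col z == 2) = false by apply/negbTE/eqP; lia.
    rewrite !andbF !orbF => /andP[Hpz _] /andP[Hzq _].
    exact: (Htri _ _ _ Hpz Hzq Hpq).
  have back : forall p q, covers lt p q -> adj p q.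
    move=> p q /andP[/orP[/andP[//]|/and3P[/eqP c0 /eqP c2 /existsP[r /andP[Hpr Hrq]]]] /forallP Hno].
    have := Hno r; have := Hc _ _ Hpr; have := Hc _ _ Hrq; have := H2 r.
    rewrite /lt Hpr Hrq /= c0 c2 => hr h1 h2.
    have -> : 0 < col r by lia.
    have -> : col r < 2 by lia.
    by [].
  move=> p q; apply/idP/idP.
  + move=> Hpq; have := Hc _ _ Hpq; case: (ltngtP (col p) (col q)) => // h _.
    * by rewrite key.
    * by rewrite (key q p) ?orbT // sym.
  + by case/orP=> [/back //|/back]; rewrite sym.
Qed.
Lemma myc_sym (T : finType) (e : rel T) m : symmetric e -> symmetric (mycielskian e m).
Proof.
move=> sym [[i j]|] [[i' k]|] //=.
by rewrite sym; congr (_ && _); apply/idP/idP; case/or3P=> [/andP[-> ->]|->|->]; rewrite ?orbT.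
Qed.

Definition mcol (T : finType) m (c : T -> bool) (x : option ('I_m.+1 * T)) : nat :=
  if x is Some (_, j) then c j else 2.
Arguments mcol {T} m c x.

Lemma mcol_ok (T : finType) (e : rel T) m (c : T -> bool) : (forall x y, e x y -> c x != c y) ->
  forall x y, mycielskian e m x y -> mcol m c x != mcol m c y.
Proof.
move=> Hc [[i j]|] [[i' k]|] //=.
- by case/andP=> /Hc; case: (c j); case: (c k).
- by case: (c j).
- by case: (c k).
Qed.

Lemma mcol_le (T : finType) m (c : T -> bool) (x : option ('I_m.+1 * T)) : mcol m c x <= 2.
Proof. by case: x => [[i j]|] //=; case: (c j). Qed.

Lemma myc_tri (T : finType) (e : rel T) m (c : T -> bool) : 0 < m -> (forall x y, e x y -> c x != c y) ->
  forall x y z, mycielskian e m x y -> mycielskian e m y z -> mycielskian e m x z -> False.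
Proof.
move=> m0 Hc [[i j]|] [[i' k]|] [[i'' l]|] //=.
- move=> /andP[/Hc h1 _] /andP[/Hc h2 _] /andP[/Hc h3 _].
  by move: h1 h2 h3; case: (c j); case: (c k); case: (c l).
- move=> /andP[_ h] /eqP h1 /eqP h2; move: h; rewrite h1 h2.
  have -> : (m == 0) = false by apply/negbTE; rewrite -lt0n.
  by rewrite andbF /= => /orP[] /eqP; lia.
- move=> /eqP h1 /eqP h2 /andP[_ h]; move: h; rewrite h1 h2.
  have -> : (m == 0) = false by apply/negbTE; rewrite -lt0n.
  by rewrite andbF /= => /orP[] /eqP; lia.
- move=> /eqP h1 /andP[_ h] /eqP h2; move: h; rewrite h1 h2.
  have -> : (m == 0) = false by apply/negbTE; rewrite -lt0n.
  by rewrite andbF /= => /orP[] /eqP; lia.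
Qed.

Lemma dp_sym (V W : finType) (a : rel V) (b : rel W) : symmetric a -> symmetric b ->
  symmetric (direct_prod a b).
Proof. by move=> sa sb p q; rewrite /direct_prod sa sb. Qed.

Lemma easy_dir (T U : finType) (g : rel T) (h : rel U) (m n : nat) :
  symmetric g -> symmetric h -> 0 < m -> 0 < n ->
  (bipartite g \/ bipartite h) ->
  is_cover_graph (direct_prod (mycielskian g m) (mycielskian h n)).
Proof.
move=> sg sh m0 n0 [[c Hc]|[c Hc]].
  apply: (@cover_of_col _ _ (fun p => mcol m c p.1)); first by apply: dp_sym; apply: myc_sym.
  4: apply: (@cover_of_col _ _ (fun p => mcol n c p.2)); first by apply: dp_sym; apply: myc_sym.
- by move=> [x1 x2] [y1 y2] /andP[/= H _]; apply: (mcol_ok Hc).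
- by move=> p; apply: mcol_le.
- move=> [x1 x2] [y1 y2] [z1 z2] /andP[/= H1 _] /andP[/= H2 _] /andP[/= H3 _].
  exact: (myc_tri m0 Hc H1 H2 H3).
- by move=> [x1 x2] [y1 y2] /andP[_ /= H]; apply: (mcol_ok Hc).
- by move=> p; apply: mcol_le.
- move=> [x1 x2] [y1 y2] [z1 z2] /andP[_ /= H1] /andP[_ /= H2] /andP[_ /= H3].
  exact: (myc_tri n0 Hc H1 H2 H3).
Qed.

Section Flow.
Variables (V : finType) (lt : rel V).
Hypothesis (Hirr : irreflexive lt) (Htr : transitive lt).
Let adj p q := covers lt p q || covers lt q p.

Lemma cov_lt p q : covers lt p q -> lt p q.
Proof. by case/andP. Qed.

Lemma cov_no p q z : covers lt p q -> lt p z -> lt z q -> False.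
Proof. by case/andP=> _ /forallP /(_ z); rewrite negb_and => /orP[] /negP. Qed.

Lemma lt_asym p q : lt p q -> lt q p -> False.
Proof. by move=> h1 h2; have := Htr h1 h2; rewrite Hirr. Qed.

Lemma cov_flip p q : adj p q -> covers lt q p = ~~ covers lt p q.
Proof.
case/orP=> h.
- rewrite h; apply/negP=> h'; exact: lt_asym (cov_lt h) (cov_lt h').
- rewrite h; apply/esym/negP=> h'; exact: lt_asym (cov_lt h) (cov_lt h').
Qed.

Lemma fwd a b c d : adj a d -> adj d c -> covers lt a b -> covers lt b c ->
  covers lt a d && covers lt d c.
Proof.
move=> Had Hdc Hab Hbc.
have Hac := Htr (cov_lt Hab) (cov_lt Hbc).
case/orP: Had => Had; case/orP: Hdc => Hdc; rewrite ?Had ?Hdc //=.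
- exfalso; exact: cov_no Had Hac (cov_lt Hdc).
- exfalso; exact: cov_no Hdc (cov_lt Had) Hac.
- exfalso; exact: lt_asym Hac (Htr (cov_lt Hdc) (cov_lt Had)).
Qed.

Lemma sq p1 p2 p3 p4 : adj p1 p2 -> adj p2 p3 -> adj p1 p4 -> adj p4 p3 ->
  (covers lt p1 p2 : nat) + covers lt p2 p3 = (covers lt p1 p4 : nat) + covers lt p4 p3.
Proof.
move=> H12 H23 H14 H43.
have adjC : forall x y, adj x y -> adj y x by move=> x y; rewrite /adj orbC.
have F1 := @fwd p1 p2 p3 p4 H14 H43.
have F2 := @fwd p1 p4 p3 p2 H12 H23.
have B1 := @fwd p3 p2 p1 p4 (adjC _ _ H43) (adjC _ _ H14).
have B2 := @fwd p3 p4 p1 p2 (adjC _ _ H23) (adjC _ _ H12).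
move: F1 F2 B1 B2.
rewrite (cov_flip H12) (cov_flip H23) (cov_flip H14) (cov_flip H43).
by case: (covers lt p1 p2); case: (covers lt p2 p3); case: (covers lt p1 p4);
   case: (covers lt p4 p3) => //= A B C D; (try by have := A erefl erefl);
   (try by have := B erefl erefl); (try by have := C erefl erefl); (try by have := D erefl erefl).
Qed.

Definition fw N (f : nat -> V) := \sum_(0 <= t < N) (covers lt (f t) (f t.+1) : nat).

Lemma fw_ext N f f' : (forall t, t <= N -> f t = f' t) -> fw N f = fw N f'.
Proof.
move=> H; apply: eq_big_nat => t /andP[_ ht].
by rewrite !H // ltnW.
Qed.

Lemma fw_rev N f : (forall t, t < N -> adj (f t) (f t.+1)) ->
  fw N f + fw N (fun t => f (N - t)) = N.
Proof.
move=> Hw; rewrite /fw [X in _ + X]big_nat_rev /= -big_split /=.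
rewrite -[X in _ = X]subn0 -[X in _ = X]muln1 -sum_nat_const_nat.
apply: eq_big_nat => t /andP[_ ht].
have -> : N - (0 + N - t.+1) = t.+1 by lia.
have -> : N - (0 + N - t.+1).+1 = t by lia.
by rewrite (cov_flip (Hw _ ht)); case: (covers _ _ _).
Qed.

Lemma move_lem N f f' :
  (forall t, t < N -> adj (f t) (f t.+1)) -> (forall t, t < N -> adj (f' t) (f' t.+1)) ->
  f 0 = f' 0 -> f N = f' N ->
  (forall t, f t != f' t -> f t.-1 = f' t.-1 /\ f t.+1 = f' t.+1) ->
  fw N f = fw N f'.
Proof.
move=> Hf Hf' H0 HN Hnc.
pose g k t := if t < k then f' t else f t.
have HgN : fw N (g N) = fw N f'.
  apply: fw_ext => t ht; rewrite /g; case: ltnP => // h.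
  by have -> : t = N by lia.
have key : forall k, k <= N -> fw N (g k) = fw N f.
  elim=> [_|k IH hk].
    by apply: fw_ext => t _; rewrite /g.
  rewrite -IH ?(ltnW hk) //.
  have [E|E] := eqVneq (f k) (f' k).
    apply: fw_ext => t _; rewrite /g ltnS leq_eqVlt.
    by case: eqVneq => [->|]; rewrite //= ltnn E.
  have [Ep En] := Hnc _ E.
  have k0 : k != 0 by apply: contra_neq E => ->.
  rewrite /fw (@big_cat_nat _ _ _ k.-1) ?leq0n ?(leq_trans (leq_pred k) (ltnW hk)) //=.
  rewrite (@big_cat_nat _ _ _ k.-1 0 N) ?leq0n ?(leq_trans (leq_pred k) (ltnW hk)) //=.
  have lt1 : k.-1 < N by lia.
  rewrite !(big_ltn lt1) prednK ?lt0n // !(big_ltn hk).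
  have Hl : \sum_(0 <= i < k.-1) (covers lt (g k.+1 i) (g k.+1 i.+1) : nat) =
            \sum_(0 <= i < k.-1) (covers lt (g k i) (g k i.+1) : nat).
    apply: eq_big_nat => t /andP[_ ht]; rewrite /g.
    have -> : t < k.+1 by lia. have -> : t < k by lia.
    have -> : t.+1 < k.+1 by lia. by have -> : t.+1 < k by lia.
  have Hr : \sum_(k.+1 <= i < N) (covers lt (g k.+1 i) (g k.+1 i.+1) : nat) =
            \sum_(k.+1 <= i < N) (covers lt (g k i) (g k i.+1) : nat).
    apply: eq_big_nat => t /andP[ht _]; rewrite /g.
    have -> : t < k.+1 = false by lia. have -> : t < k = false by lia.
    have -> : t.+1 < k.+1 = false by lia. by have -> : t.+1 < k = false by lia.
  rewrite Hl Hr; congr (_ + _); rewrite !addnA; congr (_ + _).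
  rewrite /g prednK ?lt0n //.
  have e1 : (k <= k.+1) = true by lia.
  have e2 : (k.+1 <= k.+1) = true by lia.
  have e3 : (k.+1 <= k) = false by lia.
  have e4 : (k.+2 <= k) = false by lia.
  have e5 : (k <= k) = true by lia.
  rewrite e1 e2 e3 e4 e5 /=.
  have hk1 : k.-1 < N by lia.
  have Ep' : f k.-1 = f' k.-1 := Ep.
  have A1 := Hf _ hk1; have A2 := Hf _ hk; have A3 := Hf' _ hk1; have A4 := Hf' _ hk.
  rewrite prednK ?lt0n // in A1 A3.
  rewrite -Ep' in A3 *; rewrite -En in A4 *.
  rewrite if_same; symmetry; exact: sq.
by rewrite -HgN key.
Qed.

End Flow.

Definition lev (m N t : nat) := (m - t.-1) + (t - (N - m.+1)).

Definition Wk (T : Type) (m N : nat) (x y : T) (t : nat) : option ('I_m.+1 * T) :=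
  if (t == 0) || (t == N) then None else Some (inord (lev m N t), if odd t then x else y).
Arguments Wk {T} m N x y t.

Lemma Wk_walk (T : finType) (e : rel T) m N x y t : symmetric e -> e x y ->
  m.*2 + 3 <= N -> t < N -> mycielskian e m (Wk m N x y t) (Wk m N x y t.+1).
Proof.
move=> sym Hxy HN ht; rewrite /Wk.
have [->|t0] := eqVneq t 0.
  rewrite /=; have -> : (1 == N) = false by lia.
  by rewrite /= inordK /lev; lia.
have [E|tN] := eqVneq t.+1 N.
  rewrite -E /=.
  have -> : (t == t.+1) = false by lia.
  by rewrite /= inordK /lev; lia.
rewrite /=.
have -> : (t == N) = false by lia.
rewrite /= !inordK /lev; try lia.
apply/andP; split; first by case: (odd t) => /=; rewrite ?Hxy // sym.
have [h|[h|h]] : (t <= m) \/ (m < t /\ t.+1 <= N - m.+1) \/ (N - m.+1 <= t) by lia.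
- by apply/or3P; apply: Or33; apply/eqP; lia.
- by apply/or3P; apply: Or31; apply/andP; split; apply/eqP; lia.
- by apply/or3P; apply: Or32; apply/eqP; lia.
Qed.

Lemma Wk_rev (T : Type) m N (x y : T) t : odd N -> m.*2 + 3 <= N -> t <= N ->
  Wk m N x y (N - t) = Wk m N y x t.
Proof.
move=> oN HN ht; rewrite /Wk.
have [->|t0] := eqVneq t 0; first by rewrite subn0 eqxx orbT.
have [->|tN] := eqVneq t N; first by rewrite subnn eqxx.
have -> : (N - t == 0) = false by lia.
have -> : (N - t == N) = false by lia.
rewrite /=.
have -> : lev m N (N - t) = lev m N t by rewrite /lev; lia.
by rewrite oddB // oN; case: (odd t).
Qed.

Lemma Wk_even (T : Type) m N (x y z : T) t : ~~ odd t -> Wk m N x y t = Wk m N z y t.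
Proof. by rewrite /Wk => /negbTE ->. Qed.

Lemma Wk_odd (T : Type) m N (x y w : T) t : odd t -> Wk m N x y t = Wk m N x w t.
Proof. by rewrite /Wk => ->. Qed.

Lemma Wk_0 (T : Type) m N (x y : T) : Wk m N x y 0 = None.
Proof. by []. Qed.

Section Bip.
Variables (T : finType) (e : rel T).
Hypothesis sym : symmetric e.

Definition e2 : rel (T * bool) := fun a b => e a.1 b.1 && (b.2 == ~~ a.2).

Lemma e2_sym : symmetric e2.
Proof.
move=> [x b] [y b']; rewrite /e2 /= sym; congr (_ && _).
by case: b; case: b'.
Qed.

Lemma liftp r p b : path e r p -> connect e2 (r, b) (last r p, b (+) odd (size p)).
Proof.
elim: p r b => [|y p IH] r b /=; first by rewrite addbF connect0.
case/andP=> Hry Hp.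
have -> : b (+) ~~ odd (size p) = ~~ b (+) odd (size p) by case: b; case: (odd (size p)).
apply: connect_trans (IH y (~~ b) Hp).
by apply: connect1; rewrite /e2 /= Hry eqxx.
Qed.

Lemma projp s p : path e2 s p ->
  path e s.1 (map fst p) /\ (last s p).2 = s.2 (+) odd (size p).
Proof.
elim: p s => [|y p IH] s /=; first by rewrite addbF.
case/andP=> /andP[Hsy /eqP Hb] Hp; have [H1 H2] := IH y Hp.
rewrite Hsy H1 H2 Hb; split => //.
by case: (s.2); case: (odd (size p)).
Qed.

Lemma nobip : (forall x p, path e x p -> last x p = x -> ~~ odd (size p)) -> bipartite e.
Proof.
move=> Hno.
have csym : connect_sym e by apply: sym_connect_sym.
have c2sym : connect_sym e2 by apply: sym_connect_sym; apply: e2_sym.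
exists (fun x => connect e2 (root e x, false) (x, false)) => x y Hxy.
have Rxy : root e x = root e y by apply/rootP => //; apply: connect1.
rewrite -Rxy; set r := root e x.
have reach : forall z, root e z = r -> connect e2 (r, false) (z, false) || connect e2 (r, false) (z, true).
  move=> z Hz; have : connect e r z by rewrite -Hz csym connect_root.
  case/connectP=> p Hp ->; have := liftp false Hp.
  by case: (odd (size p)) => ->; rewrite ?orbT.
have stepxy : forall b, connect e2 (r, false) (x, b) -> connect e2 (r, false) (y, ~~ b).
  move=> b H; apply: connect_trans H _; apply: connect1; by rewrite /e2 /= Hxy eqxx.
apply/negP=> /eqP Heq.
case Cx: (connect e2 (r, false) (x, false)).
- have Cy : connect e2 (r, false) (y, false) by rewrite -Heq.
  have Cy' := stepxy _ Cx.
  have : connect e2 (y, false) (y, true).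
    by apply: connect_trans Cy'; rewrite c2sym.
  case/connectP=> p Hp Hl; have [H1 H2] := projp Hp.
  have Hl1 : last y (map fst p) = y by rewrite (last_map fst p (y, false)) -Hl.
  have := Hno _ _ H1 Hl1; rewrite size_map.
  by move: H2; rewrite -Hl /= => <-.
- have Cx' : connect e2 (r, false) (x, true) by move: (reach x erefl); rewrite Cx.
  have := stepxy _ Cx'; rewrite /= -Heq Cx //.
Qed.
End Bip.

Lemma chain (T : eqType) (e : rel T) (Phi : T -> T -> nat) x p :
  symmetric e ->
  (forall x y z, e x y -> e z y -> Phi x y = Phi z y) ->
  (forall x y w, e x y -> e x w -> Phi x y = Phi x w) ->
  path e x p -> last x p = x -> odd (size p) ->
  Phi x (nth x (x :: p) 1) = Phi (nth x (x :: p) 1) x.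
Proof.
move=> sym R1 R2 /(pathP x) Hp Hl Ho.
set g := fun t => nth x (x :: p) t.
have st : forall t, t < size p -> e (g t) (g t.+1) by move=> t /Hp.
pose E t := if odd t then Phi (g t.+1) (g t) else Phi (g t) (g t.+1).
have HE : forall t, t < size p -> E t = E 0.
  elim=> // t IH ht; rewrite -IH ?(ltnW ht) // /E /=.
  case: (odd t) => /=.
  - apply: R2; first exact: st.
    by rewrite sym; apply: st; apply: ltnW.
  - apply: R1; last exact: st (ltnW ht).
    by rewrite sym; apply: st.
have L0 : 0 < size p by case: (size p) Ho.
have hL : (size p).-1 < size p by lia.
have := HE (size p).-1 hL.
have Oe : odd (size p).-1 = false by move: Ho; case: (size p) => //= n; case: (odd n).
rewrite /E Oe prednK //= => <-.
have Gl : g (size p) = x by rewrite /g -[RHS]Hl; exact: (nth_last x (x :: p)).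
rewrite Gl; apply: R1; last by rewrite sym; exact: (st 0 L0).
have := st _ hL; rewrite prednK //.
by rewrite Gl.
Qed.

Lemma Wk_N (T : Type) m N (x y : T) : Wk m N x y N = None.
Proof. by rewrite /Wk eqxx orbT. Qed.

Lemma chainW (V : finType) (lt : rel V) (T : finType) (e : rel T) k N
  (F : nat -> option ('I_k.+1 * T) -> V) x p :
  irreflexive lt -> transitive lt -> symmetric e ->
  (forall u v t, e u v -> t < N ->
     covers lt (F t (Wk k N u v t)) (F t.+1 (Wk k N u v t.+1)) ||
     covers lt (F t.+1 (Wk k N u v t.+1)) (F t (Wk k N u v t))) ->
  path e x p -> last x p = x -> odd (size p) ->
  fw lt N (fun t => F t (Wk k N x (nth x (x :: p) 1) t)) =
  fw lt N (fun t => F t (Wk k N (nth x (x :: p) 1) x t)).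
Proof.
move=> Hirr Htr sym HF Hp Hl Ho.
apply: (chain (Phi := fun u v => fw lt N (fun t => F t (Wk k N u v t)))) Hp Hl Ho => //.
- move=> u v z Huv Hzv; apply: move_lem => //; try by move=> t; apply: HF.
  + by rewrite !Wk_N.
  + move=> t Hne.
    have ot : odd t.
      apply: contraTT Hne => /negbTE ot; rewrite negbK.
      by rewrite (@Wk_even _ k N u v z t) ?ot.
    have t0 : 0 < t by move: ot; case: (t).
    have o1 : ~~ odd t.-1 by move: ot; rewrite -{1}(prednK t0) /=.
    have o2 : ~~ odd t.+1 by rewrite /= ot.
    by rewrite (@Wk_even _ k N u v z _ o1) (@Wk_even _ k N u v z _ o2).
- move=> u v w Huv Huw; apply: move_lem => //; try by move=> t; apply: HF.
  + by rewrite !Wk_N.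
  + move=> t Hne.
    have ot : ~~ odd t.
      apply: contraTN Hne => ot; rewrite negbK.
      by rewrite (@Wk_odd _ k N u v w t).
    have t0 : t != 0 by apply: contraTneq Hne => ->; rewrite !Wk_0 eqxx.
    have o1 : odd t.-1.
      by move: ot; rewrite -{1}(prednK (_ : 0 < t)) ?lt0n /= ?negbK.
    have o2 : odd t.+1 by rewrite /= ot.
    by rewrite (@Wk_odd _ k N u v w _ o1) (@Wk_odd _ k N u v w _ o2).
Qed.

Lemma hard_dir (T U : finType) (g : rel T) (h : rel U) (m n : nat) :
  symmetric g -> symmetric h ->
  is_cover_graph (direct_prod (mycielskian g m) (mycielskian h n)) ->
  bipartite g \/ bipartite h.
Proof.
move=> sg sh [lt [Hirr [Htr Hadj]]].
case: (classic (bipartite g)) => [bg|nbg]; first by left.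
case: (classic (bipartite h)) => [bh|nbh]; first by right.
exfalso.
have [x [p [Hp [Hl Ho]]]] : exists x p, path g x p /\ last x p = x /\ odd (size p).
  apply: NNPP => H; apply: nbg; apply: nobip => // x p Hp Hl; apply/negP => Ho.
  by apply: H; exists x, p.
have [x' [p' [Hp' [Hl' Ho']]]] : exists x p, path h x p /\ last x p = x /\ odd (size p).
  apply: NNPP => H; apply: nbh; apply: nobip => // z q Hq Hlq; apply/negP => Hoq.
  by apply: H; exists z, q.
set y := nth x (x :: p) 1; set y' := nth x' (x' :: p') 1.
have gxy : g x y.
  move: Hp Ho; rewrite /y; case: (p) => [|z q] /=; [by move=> _ H; discriminate H | by case/andP].
have hxy : h x' y'.
  move: Hp' Ho'; rewrite /y'; case: (p') => [|z q] /=; [by move=> _ H; discriminate H | by case/andP].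
set N := m.*2 + n.*2 + 3.
have oN : odd N by rewrite /N !oddD !odd_double.
have mN : m.*2 + 3 <= N by rewrite /N; lia.
have nN : n.*2 + 3 <= N by rewrite /N; lia.
have walkP : forall u v u' v' t, g u v -> h u' v' -> t < N ->
    direct_prod (mycielskian g m) (mycielskian h n)
      (Wk m N u v t, Wk n N u' v' t) (Wk m N u v t.+1, Wk n N u' v' t.+1).
  by move=> u v u' v' t Huv Hu'v' ht; rewrite /direct_prod /= !Wk_walk.
have E1 : fw lt N (fun t => (Wk m N x y t, Wk n N x' y' t)) =
          fw lt N (fun t => (Wk m N y x t, Wk n N x' y' t)).
  apply: (chainW (F := fun t o => (o, Wk n N x' y' t))) => // u v t Huv ht.
  by rewrite -Hadj; apply: walkP.
have E2 : fw lt N (fun t => (Wk m N y x t, Wk n N x' y' t)) =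
          fw lt N (fun t => (Wk m N y x t, Wk n N y' x' t)).
  apply: (chainW (F := fun t o => (Wk m N y x t, o))) => // u v t Huv ht.
  by rewrite -Hadj; apply: walkP; rewrite // sg.
have R : fw lt N (fun t => (Wk m N x y t, Wk n N x' y' t)) +
    fw lt N (fun t => (Wk m N x y (N - t), Wk n N x' y' (N - t))) = N.
  apply: (@fw_rev _ lt Hirr Htr N (fun t => (Wk m N x y t, Wk n N x' y' t))) => t ht.
  by rewrite -Hadj; apply: walkP.
have R' : fw lt N (fun t => (Wk m N x y (N - t), Wk n N x' y' (N - t))) =
          fw lt N (fun t => (Wk m N y x t, Wk n N y' x' t)).
  by apply: fw_ext => t ht; rewrite !Wk_rev.
rewrite R' -E2 -E1 in R.
have : odd (fw lt N (fun t => (Wk m N x y t, Wk n N x' y' t)) +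
            fw lt N (fun t => (Wk m N x y t, Wk n N x' y' t))).
  by rewrite R.
by rewrite oddD addbb.
Qed.

Unset Implicit Arguments.

Theorem theorem13 (T U : finType) (g : rel T) (h : rel U) (m n : nat) :
  symmetric g -> irreflexive g -> symmetric h -> irreflexive h ->
  0 < m -> 0 < n ->
  is_cover_graph (direct_prod (mycielskian g m) (mycielskian h n)) <->
  (bipartite g \/ bipartite h).
Proof.
move=> sg ig sh ih m0 n0; split.
- exact: hard_dir.
- exact: easy_dir.
Qed.
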